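(* Let $p\ge2$ be an even integer and let $\mu\in P_p(\mathbb{R}^d)$ be a probabilistic $p$-frame for $\mathbb{R}^d$. Then $$PFP_p(\mu)\ \ge\ \frac{(p-1)(p-3)\cdots1}{(d+p-2)(d+p-4)\cdots d}\Big(\int_{\mathbb{R}^d}\|x\|^p\,d\mu(x)\Big)^2,$$ with equality if and only if $\mu$ is a tight probabilistic $p$-frame.
   Context: $P_p(\mathbb{R}^d)$ is the set of Borel probability measures on $\mathbb{R}^d$ with finite $p$-th moment. $PFP_p(\mu)=\iint|\langle x,y\rangle|^p\,d\mu(x)\,d\mu(y)$. A probability measure $\mu$ is a probabilistic $p$-frame if there exist $0<A\le B<\infty$ with $A\|y\|^p\le\int|\langle x,y\rangle|^p\,d\mu(x)\le B\|y\|^p$ for all $y\in\mathbb{R}^d$; it is a tight probabilistic $p$-frame if this holds with $A=B$. *)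

(* Defs.v *)
(* with MathComp-Analysis.  R^d is modelled as d.-tuple R,
   equipped with the library's product sigma-algebra (= Borel sets of R^d). *)
From HB Require Import structures.
From mathcomp Require Import all_boot all_order all_algebra.
From mathcomp Require Import all_classical all_reals all_analysis.
Set Implicit Arguments. Unset Strict Implicit. Unset Printing Implicit Defensive.
Import Order.TTheory GRing.Theory Num.Theory.
Local Open Scope ring_scope.
Local Open Scope classical_set_scope.

Section defs.
Variables (R : realType) (d : nat).

Definition dotp (x y : d.-tuple R) : R := \sum_(i < d) tnth x i * tnth y i.
Definition enorm (x : d.-tuple R) : R := Num.sqrt (dotp x x).

Definition finite_pmoment (p : nat) (mu : probability (d.-tuple R) R) : Prop :=
  mu.-integrable setT (fun x => ((enorm x) ^+ p)%:E).

Definition frame_int (p : nat) (mu : probability (d.-tuple R) R) (y : d.-tuple R)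
  : \bar R := (\int[mu]_x (`|dotp x y| ^+ p)%:E)%E.

Definition prob_pframe (p : nat) (mu : probability (d.-tuple R) R) : Prop :=
  exists A B : R, 0 < A /\ A <= B /\
    forall y : d.-tuple R,
      ((A * (enorm y) ^+ p)%:E <= frame_int p mu y)%E /\
      (frame_int p mu y <= (B * (enorm y) ^+ p)%:E)%E.

Definition tight_prob_pframe (p : nat) (mu : probability (d.-tuple R) R) : Prop :=
  exists A : R, 0 < A /\
    forall y : d.-tuple R, frame_int p mu y = (A * (enorm y) ^+ p)%:E.

Definition PFP (p : nat) (mu : probability (d.-tuple R) R) : \bar R :=
  (\int[mu]_y frame_int p mu y)%E.

Definition pmoment (p : nat) (mu : probability (d.-tuple R) R) : \bar R :=
  (\int[mu]_x ((enorm x) ^+ p)%:E)%E.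

(* for p = 2m: ((p-1)(p-3)...1) / ((d+p-2)(d+p-4)...d)
   = \prod_(k < m) (2k+1) / \prod_(k < m) (d+2k) *)
Definition frame_const (p : nat) : R :=
  (\prod_(k < p./2) (k.*2.+1)%:R) / (\prod_(k < p./2) (d + k.*2)%:R).

End defs.

(* Main.v *)
Require Import Defs.
From HB Require Import structures.
From mathcomp Require Import all_boot all_order all_algebra.
From mathcomp Require Import all_classical all_reals all_analysis.
From mathcomp Require Import measurable_realfun fingroup perm ring.
Set Implicit Arguments. Unset Strict Implicit. Unset Printing Implicit Defensive.
Import Order.TTheory GRing.Theory Num.Theory.
Local Open Scope ring_scope.

Section Alg.
Variables (R : realFieldType) (d : nat).
Local Notation I := 'I_d.

Lemma sum_tuple0 (F : 0.-tuple I -> R) : \sum_(t : 0.-tuple I) F t = F [tuple].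
Proof. by rewrite (big_pred1 [tuple]) // => t; symmetry; apply/eqP; apply: tuple0. Qed.

Lemma sum_tuple_cons n (F : n.+1.-tuple I -> R) :
  \sum_(t : n.+1.-tuple I) F t = \sum_(a : I) \sum_(t : n.-tuple I) F [tuple of a :: t].
Proof.
rewrite pair_big /=.
rewrite (reindex (fun u : I * n.-tuple I => [tuple of u.1 :: u.2])) //=.
exists (fun t : n.+1.-tuple I => (thead t, [tuple of behead t])).
- by case=> a t _ /=; congr pair; apply: val_inj.
- by move=> t _; rewrite [in RHS](tuple_eta t).
Qed.

Lemma expand_pow n (a : I -> R) :
  (\sum_l a l) ^+ n = \sum_(t : n.-tuple I) \prod_(l <- t) a l.
Proof.
elim: n => [|n IH]; first by rewrite expr0 sum_tuple0 big_nil.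
rewrite exprS IH mulr_suml sum_tuple_cons; apply: eq_bigr => l _.
by rewrite mulr_sumr; apply: eq_bigr => t _; rewrite big_cons.
Qed.

Lemma sum_tuple_perm n (s : 'S_n) (F : n.-tuple I -> R) :
  \sum_(t : n.-tuple I) F t = \sum_(t : n.-tuple I) F [tuple tnth t (s j) | j < n].
Proof.
rewrite (reindex (fun t : n.-tuple I => [tuple tnth t (s j) | j < n])) //.
exists (fun t : n.-tuple I => [tuple tnth t ((s^-1)%g j) | j < n]) => t _;
  apply: eq_from_tnth => j; rewrite !tnth_map !tnth_ord_tuple ?permKV ?permK //.
Qed.

Definition symm (S : seq I -> R) := forall s1 s2, perm_eq s1 s2 -> S s1 = S s2.

Lemma perm_tp n (s : 'S_n) (t : n.-tuple I) : perm_eq [tuple tnth t (s j) | j < n] t.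
Proof. by apply/tuple_permP; exists s. Qed.

Definition dfo k : R := \prod_(j < k) (j.*2.+1)%:R.
Definition w c : R := if odd c then 0 else dfo (c./2).

Lemma wS c : w c.+1 = c%:R * w c.-1.
Proof.
case: c => [|c]; first by rewrite /w /= mul0r.
rewrite /w /= negbK; case: ifP => oc; first by rewrite mulr0.
rewrite /dfo big_ord_recr /= mulrC; congr (_ * _).
by rewrite -[in RHS](odd_double_half c) oc add0n.
Qed.

Definition W (s : seq I) : R := \prod_(l < d) w (count_mem l s).
Definition Ra a (s : seq I) : R :=
  w (count_mem a s).-1 * \prod_(l < d | l != a) w (count_mem l s).

Lemma W_cons a s : W (a :: s) = (count_mem a s)%:R * Ra a s.
Proof.
rewrite /W /Ra (bigD1 a) //= eqxx add1n wS -mulrA; congr (_ * (_ * _)).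
by apply: eq_bigr => l la; rewrite eq_sym (negbTE la).
Qed.

Lemma Ra_cons a s : Ra a (a :: s) = W s.
Proof.
rewrite /W /Ra [in RHS](bigD1 a) //= eqxx add1n /=; congr (_ * _).
by apply: eq_bigr => l la; rewrite eq_sym (negbTE la).
Qed.

Lemma W_cons2 a s : W (a :: a :: s) = (count_mem a s).+1%:R * W s.
Proof. by rewrite W_cons Ra_cons /= eqxx. Qed.

Lemma W_symm : symm W.
Proof. by move=> s1 s2 /seq.permP H; apply: eq_bigr => l _; rewrite H. Qed.

Lemma Ra_symm a : symm (Ra a).
Proof.
move=> s1 s2 /seq.permP H; rewrite /Ra H; congr (_ * _).
by apply: eq_bigr => l _; rewrite H.
Qed.


Lemma count_sum n a (t : n.-tuple I) :
  (count_mem a t)%:R = \sum_(j < n) (tnth t j == a)%:R :> R.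
Proof.
rewrite -sum1_count big_tuple natr_sum /=.
by rewrite big_mkcond; apply: eq_bigr => j _; case: (_ == _).
Qed.

Lemma stein_step n (S : seq I -> R) : symm S ->
  \sum_(t : n.+2.-tuple I) W t * S t =
  n.+1%:R * \sum_(t : n.-tuple I) W t * \sum_(a : I) S (a :: a :: t).
Proof.
move=> HS.
have key a : \sum_(t : n.+1.-tuple I) W (a :: t) * S (a :: t) =
    n.+1%:R * \sum_(t : n.-tuple I) W t * S (a :: a :: t).
  under eq_bigr => t _ do rewrite W_cons count_sum !mulr_suml.
  rewrite exchange_big /=.
  have ej (j : 'I_n.+1) : \sum_(t : n.+1.-tuple I) (tnth t j == a)%:R * Ra a t * S (a :: t)
      = \sum_(t : n.+1.-tuple I) (tnth t ord0 == a)%:R * Ra a t * S (a :: t).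
    rewrite [RHS](sum_tuple_perm (tperm ord0 j)); apply: eq_bigr => t _.
    rewrite tnth_map tnth_ord_tuple tpermL; congr (_ * _ * _).
      by apply: Ra_symm; rewrite perm_sym perm_tp.
    by apply: HS; rewrite perm_cons perm_sym perm_tp.
  rewrite (eq_bigr _ (fun j _ => ej j)) sumr_const card_ord mulr_natl.
  congr (_ *+ _); rewrite sum_tuple_cons (bigD1 a) //= [X in _ + X]big1 ?addr0.
    by apply: eq_bigr => t _; rewrite tnth0 eqxx mul1r Ra_cons.
  move=> b ba; apply: big1 => t _; by rewrite tnth0 (negbTE ba) mul0r mul0r.
rewrite sum_tuple_cons (eq_bigr _ (fun a _ => key a)) -mulr_sumr; congr (_ * _).
rewrite exchange_big /=; apply: eq_bigr => t _; by rewrite mulr_sumr.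
Qed.

Fixpoint dup (s : seq I) : seq I := if s is a :: s' then a :: a :: dup s' else [::].

Lemma stein m (S : seq I -> R) : symm S ->
  \sum_(t : (m.*2).-tuple I) W t * S t = dfo m * \sum_(k : m.-tuple I) S (dup k).
Proof.
elim: m S => [|m IH] S HS.
  rewrite !sum_tuple0 /dfo big_ord0 mul1r (_ : W [tuple] = 1) ?mul1r //.
  by rewrite /W big1 // => l _; rewrite /w /dfo /= big_ord0.
have -> := stein_step (m.*2) HS.
rewrite (IH (fun s => \sum_(a : I) S [:: a, a & s])); last first.
  by move=> s1 s2 H; apply: eq_bigr => a _; apply: HS; rewrite !perm_cons.
rewrite /dfo big_ord_recr /= sum_tuple_cons exchange_big /=.
by rewrite mulrA [_ * (_ %:R)]mulrC.
Qed.

Definition G m : R := \prod_(j < m) (d + j.*2)%:R.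

Lemma sum_count (s : seq I) : \sum_(a : I) (count_mem a s)%:R = (size s)%:R :> R.
Proof.
elim: s => [|x s IH]; first by rewrite big1.
rewrite /= (eq_bigr (fun a => (x == a)%:R + (count_mem a s)%:R)); last by move=> a _; rewrite natrD.
rewrite big_split /= IH (bigD1 x) //= eqxx big1 ?addr0; last first.
  by move=> a; rewrite eq_sym => /negbTE ->.
by rewrite -add1n natrD.
Qed.

Lemma size_dup s : size (dup s) = (size s).*2.
Proof. by elim: s => //= a s ->. Qed.

Lemma W_dup m : \sum_(k : m.-tuple I) W (dup k) = G m.
Proof.
elim: m => [|m IH].
  rewrite sum_tuple0 /G big_ord0 /W big1 // => l _; by rewrite /w /dfo /= big_ord0.
rewrite sum_tuple_cons exchange_big /= /G big_ord_recr /= -/(G m) -IH mulr_suml.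
apply: eq_bigr => k _.
under eq_bigr do rewrite W_cons2.
rewrite -mulr_suml mulrC; congr (_ * _).
rewrite (eq_bigr (fun a => (count_mem a (dup k))%:R + 1)); last first.
  by move=> a _; rewrite -addn1 natrD.
rewrite big_split /= sum_count size_dup size_tuple sumr_const card_ord.
by rewrite -natrD addnC.
Qed.

Definition mon (s : seq I) (y : d.-tuple R) : R := \prod_(l <- s) tnth y l.
Definition sgnb n (e : {ffun 'I_n -> bool}) : R := \prod_(q < n) (if e q then 1 else -1).
Definition yv n (i0 : n.-tuple I) (e : {ffun 'I_n -> bool}) : d.-tuple R :=
  [tuple \sum_(q < n) ((e q) && (tnth i0 q == l))%:R | l < d].

Lemma prodr_bool (T : finType) (P : pred T) :
  \prod_(i : T) (P i)%:R = ([forall i, P i])%:R :> R.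
Proof.
case: (boolP [forall i, P i]) => [/forallP H | /forallPn [i Hi]].
  by rewrite big1 // => i _; rewrite H.
by rewrite (bigD1 i) //= (negbTE Hi) mul0r.
Qed.

Lemma eps_sum n (g : {ffun 'I_n -> 'I_n}) :
  \sum_(e : {ffun 'I_n -> bool}) sgnb e * \prod_(j < n) (e (g j))%:R
  = ([forall q, q \in codom g])%:R.
Proof.
have step e : sgnb e * \prod_(j < n) (e (g j))%:R =
   \prod_(q < n) ((if e q then 1 else -1) * ((q \in codom g) ==> e q)%:R).
  rewrite big_split /= prodr_bool prodr_bool; congr (_ * _%:R).
  congr (nat_of_bool _); apply/idP/idP => /forallP H; apply/forallP => q.
   - by apply/implyP => /codomP [j ->]; exact: H.
   - exact: (implyP (H (g q)) (codom_f g q)).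
rewrite (eq_bigr _ (fun e _ => step e)).
rewrite -(bigA_distr_bigA (fun q b => (if b then 1 else -1) * ((q \in codom g) ==> b)%:R)) /=.
rewrite -prodr_bool; apply: eq_bigr => q _; rewrite big_bool /=.
by case: (q \in codom g) => /=; rewrite ?mul1r ?mulr1 ?mulr0 ?addr0 // addrN.
Qed.

Lemma tuple_ind n (t u : n.-tuple I) :
  \prod_(j < n) (tnth u j == tnth t j)%:R = (t == u)%:R :> R.
Proof.
rewrite prodr_bool; congr ((_ : bool)%:R); apply/forallP/eqP => [H|->] //.
by apply: eq_from_tnth => j; apply/esym/eqP/H.
Qed.

Lemma surj_perm n (g : {ffun 'I_n -> 'I_n}) (i0 : n.-tuple I) :
  [forall q, q \in codom g] -> perm_eq [tuple tnth i0 (g j) | j < n] i0.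
Proof.
move=> /forallP Hs.
have Hi : enum 'I_n =i map g (enum 'I_n) by move=> q; rewrite mem_enum -codomE Hs.
have Hu : uniq (map g (enum 'I_n)).
  by rewrite (uniq_size_uniq (enum_uniq _) Hi) size_map.
have Hp : perm_eq (map g (enum 'I_n)) (enum 'I_n).
  by apply: (uniq_perm Hu (enum_uniq _)) => q; rewrite Hi.
have -> : val [tuple tnth i0 (g j) | j < n] = map (tnth i0) (map g (enum 'I_n)).
  by rewrite /= -map_comp.
rewrite -[X in perm_eq _ X]map_tnth_enum; exact: perm_map.
Qed.

Lemma polar n (U : seq I -> R) (i0 : n.-tuple I) : symm U ->
  \sum_(e : {ffun 'I_n -> bool}) sgnb e * \sum_(t : n.-tuple I) U t * mon t (yv i0 e) =
  (\sum_(g : {ffun 'I_n -> 'I_n}) ([forall q, q \in codom g])%:R) * U i0.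
Proof.
move=> HU.
have Hm e (t : n.-tuple I) : mon t (yv i0 e) = \sum_(g : {ffun 'I_n -> 'I_n})
   (\prod_(j < n) (e (g j))%:R) * (t == [tuple tnth i0 (g j) | j < n])%:R.
  rewrite /mon big_tuple (eq_bigr (fun j => \sum_(q < n) ((e q)%:R * (tnth i0 q == tnth t j)%:R))); last first.
    move=> j _; rewrite tnth_map tnth_ord_tuple; apply: eq_bigr => q _.
    by rewrite -natrM mulnb.
  rewrite bigA_distr_bigA /=; apply: eq_bigr => g _; rewrite big_split /=.
  by rewrite -tuple_ind; congr (_ * _); apply: eq_bigr => j _; rewrite tnth_map tnth_ord_tuple.
transitivity (\sum_(g : {ffun 'I_n -> 'I_n}) (\sum_(t : n.-tuple I) U t *
    (t == [tuple tnth i0 (g j) | j < n])%:R) *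
    \sum_(e : {ffun 'I_n -> bool}) sgnb e * \prod_(j < n) (e (g j))%:R).
  under eq_bigr => e _ do under eq_bigr => t _ do rewrite Hm mulr_sumr.
  under eq_bigr => e _ do rewrite exchange_big mulr_sumr.
  rewrite exchange_big /=; apply: eq_bigr => g _.
  rewrite mulrC mulr_suml; apply: eq_bigr => e _; rewrite !mulr_sumr; apply: eq_bigr => t _.
  by ring.
rewrite mulr_suml; apply: eq_bigr => g _.
rewrite eps_sum (bigD1 [tuple tnth i0 (g j) | j < n]) //= eqxx mulr1 big1 ?addr0; last first.
  by move=> t /negbTE ->; rewrite mulr0.
case: (boolP [forall q, q \in codom g]) => Hs; last by rewrite !mulr0 mul0r.
by rewrite mulr1 mul1r; apply: HU; exact: surj_perm.
Qed.

Lemma ident n (U : seq I -> R) : symm U ->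
  (forall y : d.-tuple R, \sum_(t : n.-tuple I) U t * mon t y = 0) ->
  forall t : n.-tuple I, U t = 0.
Proof.
move=> HU H0 t; have := polar t HU.
rewrite big1; last by move=> e _; rewrite H0 mulr0.
move/esym/eqP; rewrite mulf_eq0 => /orP [HK|/eqP //]; exfalso; move: HK.
rewrite (bigD1 [ffun j => j]) //=.
have -> : [forall q, q \in codom [ffun j : 'I_n => j]].
  by apply/forallP => q; apply/codomP; exists q; rewrite ffunE.
rewrite paddr_eq0 ?ler01 ?sumr_ge0 ?oner_eq0 // => i _; exact: ler0n.
Qed.
End Alg.

Section More.
Variables (R : realType) (d : nat).
Local Notation I := 'I_d.

Lemma mon_symm (y : d.-tuple R) : symm (fun s : seq I => mon s y).
Proof. by move=> s1 s2 H; apply: perm_big. Qed.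

Lemma dotp_pow n (x y : d.-tuple R) :
  dotp x y ^+ n = \sum_(t : n.-tuple I) mon t x * mon t y.
Proof.
rewrite /dotp expand_pow; apply: eq_bigr => t _.
by rewrite /mon -big_split.
Qed.

Lemma mon_dup (k : seq I) (y : d.-tuple R) :
  mon (dup k) y = \prod_(l <- k) (tnth y l * tnth y l).
Proof. by elim: k => [|a k IH]; rewrite /mon /= ?big_nil // !big_cons -IH mulrA. Qed.

Lemma fW m (y : d.-tuple R) :
  \sum_(t : (m.*2).-tuple I) W R t * mon t y = dfo R m * dotp y y ^+ m.
Proof.
rewrite (@stein R d m (fun s => mon s y)); last exact: mon_symm.
congr (_ * _); rewrite /dotp expand_pow; apply: eq_bigr => k _; exact: mon_dup.
Qed.

Lemma normW m : \sum_(t : (m.*2).-tuple I) W R t * W R t = dfo R m * G R d m.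
Proof. by rewrite (@stein R d m (@W R d)) ?W_dup //; exact: W_symm. Qed.

Lemma dfo_gt0 m : 0 < dfo R m.
Proof. by apply: prodr_gt0 => j _; rewrite ltr0n. Qed.

Lemma G_gt0 m : (0 < d)%N -> 0 < G R d m.
Proof. by move=> d0; apply: prodr_gt0 => j _; rewrite ltr0n addn_gt0 d0. Qed.

Lemma enorm_pow m (x : d.-tuple R) : enorm x ^+ (m.*2) = dotp x x ^+ m.
Proof.
rewrite -mul2n exprM sqr_sqrtr // /dotp; apply: sumr_ge0 => l _; by rewrite -expr2 sqr_ge0.
Qed.

Lemma CS (X : finType) (u v : X -> R) (A := \sum_x u x * u x)
  (B := \sum_x u x * v x) (C := \sum_x v x * v x) :
  0 < A -> B * B <= A * C /\ (B * B = A * C -> forall x, v x = B / A * u x).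
Proof.
move=> A0.
have E : \sum_x (A * v x - B * u x) ^+ 2 = A * (A * C - B * B).
  rewrite (eq_bigr (fun x => A * A * (v x * v x) - (A * B *+ 2) * (u x * v x)
     + B * B * (u x * u x))); last by move=> x _; ring.
  rewrite big_split big_split /= sumrN -!mulr_sumr -/A -/B -/C; ring.
have S0 : 0 <= \sum_x (A * v x - B * u x) ^+ 2 by apply: sumr_ge0 => x _; exact: sqr_ge0.
split.
  by rewrite -subr_ge0 -(pmulr_rge0 _ A0) -E.
move=> HBC x.
have := @psumr_eq0P _ _ xpredT (fun x => (A * v x - B * u x) ^+ 2) (fun x _ => sqr_ge0 _).
rewrite E HBC subrr mulr0 => /(_ erefl x isT) /eqP.
rewrite sqrf_eq0 subr_eq0 => /eqP H.
by rewrite -mulrA mulrCA -H mulrA mulVf ?mul1r // gt_eqF.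
Qed.


Lemma measurable_mon (s : seq I) : measurable_fun setT (fun x : d.-tuple R => mon s x).
Proof.
elim: s => [|a s IH]; rewrite /mon.
  by under eq_fun do rewrite big_nil; exact: measurable_cst.
under eq_fun do rewrite big_cons.
by apply: measurable_realfun.measurable_funM => //; exact: measurable_tnth.
Qed.

Lemma abs_tnth_le (x : d.-tuple R) l : `|tnth x l| <= enorm x.
Proof.
rewrite /enorm -sqrtr_sqr; apply: ler_wsqrtr.
rewrite /dotp (bigD1 l) //= expr2 lerDl; apply: sumr_ge0 => k _.
by rewrite -expr2 sqr_ge0.
Qed.

Lemma mon_le (s : seq I) (x : d.-tuple R) : `|mon s x| <= enorm x ^+ size s.
Proof.
elim: s => [|a s IH]; rewrite /mon ?big_nil ?normr1 ?expr0 // big_cons normrM /=.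
rewrite exprS; apply: ler_pM => //; exact: abs_tnth_le.
Qed.

Variables (mu : probability (d.-tuple R) R) (p : nat).
Hypothesis Hp : finite_pmoment p mu.

Lemma int_mon (t : p.-tuple I) : mu.-integrable setT (fun x => (mon t x)%:E).
Proof.
apply: (le_integrable measurableT _ _ Hp) => //.
  by apply/measurable_EFinP; exact: measurable_mon.
move=> x _ /=; rewrite lee_fin [X in _ <= X]ger0_norm; last by rewrite exprn_ge0 // sqrtr_ge0.
by have := mon_le t x; rewrite size_tuple.
Qed.

Definition Tm (s : seq I) : R := fine (\int[mu]_x (mon s x)%:E)%E.

Lemma int_monE (t : p.-tuple I) : (\int[mu]_x (mon t x)%:E = (Tm t)%:E)%E.
Proof. by rewrite fineK // integrable_fin_num // int_mon. Qed.

Lemma Tm_symm : symm Tm.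
Proof. by move=> s1 s2 H; rewrite /Tm; under eq_integral do rewrite (mon_symm _ H). Qed.

Lemma int_comb (S : seq I -> R) :
  (\int[mu]_x (\sum_(t : p.-tuple I) S t * mon t x)%:E = (\sum_(t : p.-tuple I) S t * Tm t)%:E)%E.
Proof.
under eq_integral do rewrite -sumEFin.
under eq_integral do under eq_bigr do rewrite EFinM.
rewrite integral_sum //; last by move=> t; apply: (integrableZl measurableT); exact: int_mon.
rewrite -sumEFin; apply: eq_bigr => t _.
by rewrite integralZl // ?int_monE // int_mon.
Qed.

End More.

Theorem mainTheorem14 (R : realType) (d p : nat) (mu : probability (d.-tuple R) R) :
  (0 < d)%N -> (2 <= p)%N -> ~~ odd p ->
  finite_pmoment p mu -> prob_pframe p mu ->
  ((frame_const R d p)%:E * (pmoment p mu * pmoment p mu) <= PFP p mu)%E /\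
  (PFP p mu = (frame_const R d p)%:E * (pmoment p mu * pmoment p mu)
     <-> tight_prob_pframe p mu)%E.
Proof.
move=> d0 _ pev.
have [m ->] : exists m, p = m.*2.
  by exists p./2; rewrite -[p in LHS](odd_double_half p) (negbTE pev) add0n.
move=> Hp Hfr.
set X := (m.*2).-tuple 'I_d.
pose T := Tm mu.
have hF y : frame_int (m.*2) mu y = (\sum_(t : X) T t * mon t y)%:E.
  rewrite /frame_int.
  under eq_integral => x _ do rewrite -normrX ger0_norm ?exprn_even_ge0 ?odd_double // dotp_pow.
  under eq_integral => x _ do under eq_bigr => t _ do rewrite mulrC.
  rewrite (int_comb Hp (fun s => mon s y)); congr EFin.
  by apply: eq_bigr => t _; rewrite mulrC.
have hPFP : PFP (m.*2) mu = (\sum_(t : X) T t * T t)%:E.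
  by rewrite /PFP; under eq_integral do rewrite hF; exact: (int_comb Hp T).
have dfo0 := dfo_gt0 R m.
have G0 := G_gt0 R m d0.
have hN (x : d.-tuple R) : enorm x ^+ (m.*2) = \sum_(t : X) (W R t / dfo R m) * mon t x.
  rewrite enorm_pow; under eq_bigr do rewrite mulrAC.
  by rewrite -mulr_suml fW mulrC mulKf // gt_eqF.
set b := \sum_(t : X) W R t * T t.
have hpm : pmoment (m.*2) mu = (b / dfo R m)%:E.
  rewrite /pmoment; under eq_integral do rewrite hN.
  rewrite (int_comb Hp (fun s => W R s / dfo R m)) /b mulr_suml; congr EFin.
  by apply: eq_bigr => t _; rewrite mulrAC.
set a := \sum_(t : X) T t * T t.
have hc : frame_const R d (m.*2) = dfo R m / G R d m by rewrite /frame_const doubleK.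
have nW := normW R d m.
have nWpos : 0 < dfo R m * G R d m by rewrite mulr_gt0.
have [CS1 CS2] : b * b <= (dfo R m * G R d m) * a /\
   (b * b = (dfo R m * G R d m) * a -> forall t : X, T t = b / (dfo R m * G R d m) * W R t).
  rewrite -nW; apply: (@CS R X (fun t : X => W R t) (fun t : X => T t)).
  by rewrite nW.
rewrite hPFP hpm hc -!EFinM lee_fin.
have ndfo : dfo R m != 0 by rewrite gt_eqF.
have nG : G R d m != 0 by rewrite gt_eqF.
have e1 : dfo R m / G R d m * (b / dfo R m * (b / dfo R m)) = (b * b) / (dfo R m * G R d m).
  by field; rewrite ndfo nG.
split.
  by rewrite e1 ler_pdivrMr // -/a [a * _]mulrC.
split.
  move=> H0; have H := EFin_inj H0.
  have HB : b * b = dfo R m * G R d m * a.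
    by rewrite /a H e1; field; rewrite ndfo nG.
  have Ht := CS2 HB.
  set lam := b / (dfo R m * G R d m) in Ht.
  have hF2 y : frame_int (m.*2) mu y = (lam * dfo R m * enorm y ^+ (m.*2))%:E.
    rewrite hF (eq_bigr (fun t : X => lam * (W R t * mon t y))) => [|t _]; last by rewrite Ht mulrA.
    by rewrite -mulr_sumr fW enorm_pow mulrA.
  case: Hfr => A [B [A0 [_ HAB]]].
  pose y1 := nseq_tuple d (1 : R).
  have e1pos : 0 < enorm y1 ^+ (m.*2).
    rewrite enorm_pow /dotp (eq_bigr (fun _ => 1)) => [|l _]; last by rewrite tnth_nseq mulr1.
    by rewrite sumr_const card_ord exprn_gt0 // ltr0n.
  have := (HAB y1).1; rewrite hF2 lee_fin ler_pM2r // => Hl.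
  exists (lam * dfo R m); split; first exact: lt_le_trans Hl.
  by move=> y; exact: hF2.
case=> A [A0 HA].
have HU : forall t : X, T t - A / dfo R m * W R t = 0.
  apply: (@ident R d (m.*2) (fun s => T s - A / dfo R m * W R s)).
    by move=> s1 s2 H; rewrite /T (Tm_symm mu H) (W_symm R H).
  move=> y; have H0 := HA y; rewrite hF in H0; have H := EFin_inj H0.
  rewrite (eq_bigr (fun t : X => T t * mon t y - A / dfo R m * (W R t * mon t y))) => [|t _]; last first.
    by rewrite mulrBl mulrA.
  by rewrite sumrB -mulr_sumr fW H enorm_pow mulrA divfK // subrr.
have Ht (t : X) : T t = A / dfo R m * W R t by apply/eqP; rewrite -subr_eq0 HU.
have ha : a = (A / dfo R m) ^+ 2 * (dfo R m * G R d m).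
  rewrite /a (eq_bigr (fun t : X => (A / dfo R m) ^+ 2 * (W R t * W R t))) => [|t _].
    by rewrite -mulr_sumr nW.
  by rewrite Ht; ring.
have hb : b = (A / dfo R m) * (dfo R m * G R d m).
  rewrite /b (eq_bigr (fun t : X => (A / dfo R m) * (W R t * W R t))) => [|t _].
    by rewrite -mulr_sumr nW.
  by rewrite Ht; ring.
congr EFin; rewrite -/a ha hb; field; by rewrite ndfo nG.
Qed.
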